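(* Let $n\geq 1$, $m=\frac{n^2+n}{2}$, and let $z:\mathbb{R}^n\to\mathbb{R}^m$ be the map $z(x)=\begin{bmatrix}x_1^2 & x_1x_2 & \cdots & x_1x_n & x_2^2 & x_2x_3 & \cdots & x_n^2\end{bmatrix}^\top$ listing all quadratic monomials of $x$. Let $E=E^\top\in\mathbb{R}^{n\times n}$ be positive definite, $\alpha>0$, and $\mathcal{E}_\alpha=\{x : x^\top E x\leq\alpha^2\}$. Let $c_1,c_2\in\mathbb{R}^n$ be two nonzero, linearly independent vectors, and define $\phi(x)=x^\top Q x$ with $Q=\frac12(c_1c_2^\top+c_2c_1^\top)$. Then there exists $b\in\mathbb{R}^m$ such that $\phi(x)=b^\top z(x)$ for all $x$. Moreover, for $W$ equal to either $(c_2^\top E^{-1}c_2)\,c_1c_1^\top$ or $(c_1^\top E^{-1}c_1)\,c_2c_2^\top$, we have $$\begin{bmatrix} x\\ w\end{bmatrix}^\top\begin{bmatrix}\alpha^2 W & 0\\ 0 & -bb^\top\end{bmatrix}\begin{bmatrix} x\\ w\end{bmatrix}\geq 0\quad\text{for all } x\in\mathcal{E}_\alpha,\ w=z(x).$$ *)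

(* Defs.v *)
From HB Require Import structures.
From mathcomp Require Import all_boot all_order all_algebra.
Set Implicit Arguments. Unset Strict Implicit. Unset Printing Implicit Defensive.
Import Order.TTheory GRing.Theory Num.Theory.
Local Open Scope ring_scope.

Definition msize (n : nat) : nat := ((n * n + n) %/ 2)%N.

Definition qpairs (n : nat) : seq (nat * nat) :=
  [seq (i, j) | i <- iota 0 n, j <- iota i (n - i)].

(* i-th coordinate (0-based) of x, 0 if out of range *)
Definition vget (R : ringType) (n : nat) (x : 'cV[R]_n) (i : nat) : R :=
  match @insub nat (fun k => k < n)%N 'I_n i with
  | Some k => x k 0
  | None => 0
  end.

Definition zvec (R : ringType) (n : nat) (x : 'cV[R]_n) : 'cV[R]_(msize n) :=
  \col_(k < msize n)
    (let p := nth (0%N, 0%N) (qpairs n) k in vget x p.1 * vget x p.2).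

Definition qform (R : ringType) (n : nat) (M : 'M[R]_n) (x : 'cV[R]_n) : R :=
  (x^T *m M *m x) 0 0.

Definition posdef (R : numDomainType) (n : nat) (E : 'M[R]_n) : Prop :=
  forall x : 'cV[R]_n, x != 0 -> 0 < qform E x.

(* Main.v *)
Require Import Defs.
From HB Require Import structures.
From mathcomp Require Import all_boot all_order all_algebra.
From mathcomp Require Import ring zify.
Import Order.TTheory GRing.Theory Num.Theory.
Local Open Scope ring_scope.

Section A.
Variable (R : realFieldType) (n : nat) (E : 'M[R]_n).
Hypothesis (ES : E^T = E) (EP : posdef E).

Lemma tr11 (M : 'M[R]_1) : M 0 0 = M^T 0 0.
Proof. by rewrite mxE. Qed.

Definition bil (u v : 'cV[R]_n) := (u^T *m E *m v) 0 0.

Lemma bil_sym u v : bil u v = bil v u.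
Proof.
rewrite /bil [LHS]tr11 !trmx_mul trmxK ES mulmxA //.
Qed.

Lemma bilDl a u v w : bil (a *: u + v) w = a * bil u w + bil v w.
Proof. by rewrite /bil linearD linearZ /= !mulmxDl -!scalemxAl !mxE. Qed.

Lemma bilDr a u v w : bil w (a *: u + v) = a * bil w u + bil w v.
Proof. by rewrite bil_sym bilDl !(bil_sym w). Qed.

Lemma bilZl a u w : bil (a *: u) w = a * bil u w.
Proof. by rewrite /bil linearZ /= -!scalemxAl !mxE. Qed.

Lemma bilZr a u w : bil w (a *: u) = a * bil w u.
Proof. by rewrite bil_sym bilZl bil_sym. Qed.

Lemma qpos u : 0 <= bil u u.
Proof.
have [->|nz] := eqVneq u 0; last exact/ltW/EP.
by rewrite /bil mulmx0 mxE.
Qed.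

Lemma CS u x : bil u x ^+ 2 <= bil u u * bil x x.
Proof.
have [x0|nz] := eqVneq x 0.
  by rewrite x0 /bil !mulmx0 !mxE expr0n /= mulr0.
have Bp : 0 < bil x x by apply: EP.
set a := bil u x; set B := bil x x.
have := qpos (B *: u + (- a) *: x).
rewrite bilDl !bilDr !bilZl !bilZr -/a -/B (bil_sym x u) -/a.
move=> h.
have h2 : 0 <= B * (bil u u * B - a ^+ 2).
  apply: le_trans h _; rewrite le_eqVlt; apply/orP; left; apply/eqP; ring.
rewrite pmulr_rge0 // subr_ge0 in h2.
exact: h2.
Qed.

Lemma Eunit : E \in unitmx.
Proof.
rewrite unitmxE unitfE; apply/negP => /det0P [v vn0 vE].
have := EP (v^T) _; rewrite trmx_eq0 => /(_ vn0).
rewrite /qform trmxK vE mul0mx mxE ltxx //.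
Qed.

Lemma key (c x : 'cV[R]_n) :
  ((c^T *m x) 0 0) ^+ 2 <= (c^T *m invmx E *m c) 0 0 * qform E x
  /\ 0 <= (c^T *m invmx E *m c) 0 0.
Proof.
set u := invmx E *m c.
have Eu : E *m u = c by rewrite /u mulmxA mulmxV ?Eunit // mul1mx.
have e1 : (c^T *m x) 0 0 = bil u x.
  by rewrite /bil -Eu trmx_mul ES.
have e2 : (c^T *m invmx E *m c) 0 0 = bil u u.
  rewrite /bil -!mulmxA Eu.
  by rewrite [RHS]tr11 trmx_mul trmxK.
rewrite e1 e2; split; [exact: CS | exact: qpos].
Qed.
End A.
Section B.
Variable R : comRingType.

Definition hsym (g : nat -> nat -> R) i j := if i == j then g i j else g i j + g j i.

Lemma sumrS n m (F : nat -> R) : (m <= n)%N ->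
  \sum_(m <= i < n.+1) F i = \sum_(m <= i < n) F i + F n.
Proof. exact: big_nat_recr. Qed.

Lemma tri (g : nat -> nat -> R) n :
  \sum_(0 <= i < n) \sum_(0 <= j < n) g i j =
  \sum_(0 <= i < n) \sum_(i <= j < n) hsym g i j.
Proof.
elim: n => [|n IH]; first by rewrite !big_geq.
rewrite (sumrS n 0 (fun i => \sum_(0 <= j < n.+1) g i j))//.
rewrite (sumrS n 0 (fun i => \sum_(i <= j < n.+1) hsym g i j))//.
rewrite (sumrS n 0 (g n)) // big_nat1.
have e1 : \sum_(0 <= i < n) \sum_(0 <= j < n.+1) g i j =
   \sum_(0 <= i < n) (\sum_(0 <= j < n) g i j + g i n).
  by apply: eq_big_nat => i _; rewrite sumrS.
have e2 : \sum_(0 <= i < n) \sum_(i <= j < n.+1) hsym g i j =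
   \sum_(0 <= i < n) (\sum_(i <= j < n) hsym g i j + (g i n + g n i)).
  apply: eq_big_nat => i /andP [_ lt]; rewrite sumrS; last exact: ltnW. congr (_ + _).
  by rewrite /hsym (ltn_eqF lt).
rewrite e1 e2.
rewrite !big_split /= -IH /hsym eqxx.
by rewrite !addrA.
Qed.

Lemma qpairs_sum (F : nat * nat -> R) n :
  \sum_(p <- qpairs n) F p = \sum_(0 <= i < n) \sum_(i <= j < n) F (i, j).
Proof. by rewrite /qpairs big_allpairs_dep /index_iota subn0. Qed.

End B.

Lemma sum_succ n : ((\sum_(0 <= i < n) i.+1) * 2 = n * n + n)%N.
Proof.
elim: n => [|n IH]; first by rewrite big_geq.
rewrite big_nat_recr //= mulnDl IH. lia.
Qed.

Lemma size_qpairs n : size (qpairs n) = msize n.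
Proof.
rewrite /qpairs size_allpairs_dep.
rewrite (eq_map (g := fun i => n - i)%N); last by move=> i; rewrite size_iota.
rewrite sumnE big_map (_ : iota 0 n = index_iota 0 n); last by rewrite /index_iota subn0.
rewrite big_nat_rev.
rewrite (eq_big_nat _ _ (F2 := fun i => i.+1)); last first.
  move=> i /andP [_ lt]; rewrite add0n. lia.
by rewrite /msize -sum_succ mulnK.
Qed.

Section C.
Variable (R : realFieldType) (n : nat).

Definition mget (M : 'M[R]_n) (i j : nat) : R :=
  match @insub nat (fun k => (k < n)%N) 'I_n i, @insub nat (fun k => (k < n)%N) 'I_n j with
  | Some a, Some b => M a b
  | _, _ => 0
  end.

Lemma qform_sum (M : 'M[R]_n) x :
  qform M x = \sum_(0 <= i < n) \sum_(0 <= j < n) vget x i * mget M i j * vget x j.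
Proof.
transitivity (\sum_(i < n) \sum_(j < n) x i 0 * M i j * x j 0).
  rewrite /qform mxE exchange_big /=; apply: eq_bigr => j _.
  rewrite mxE big_distrl /=; apply: eq_bigr => i _.
  by rewrite mxE.
rewrite big_mkord; apply: eq_bigr => i _; rewrite big_mkord; apply: eq_bigr => j _.
by rewrite /vget /mget !valK.
Qed.

Definition hq (M : 'M[R]_n) (p : nat * nat) :=
  if p.1 == p.2 then mget M p.1 p.2 else mget M p.1 p.2 + mget M p.2 p.1.

Definition bvec (M : 'M[R]_n) : 'cV[R]_(msize n) :=
  \col_(k < msize n) hq M (nth (0%N, 0%N) (qpairs n) k).

Lemma bz M x : ((bvec M)^T *m zvec x) 0 0 =
   \sum_(p <- qpairs n) hq M p * (vget x p.1 * vget x p.2).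
Proof.
rewrite mxE (big_nth (0%N, 0%N)) size_qpairs big_mkord; apply: eq_bigr => k _.
by rewrite !mxE.
Qed.

Lemma bvecP M x : qform M x = ((bvec M)^T *m zvec x) 0 0.
Proof.
rewrite bz qpairs_sum qform_sum tri; apply: eq_bigr => i _; apply: eq_bigr => j _.
rewrite /hsym /hq /=; case: eqP => [->|_]; ring.
Qed.

Lemma qformZ k (M : 'M[R]_n) x : qform (k *: M) x = k * qform M x.
Proof. by rewrite /qform -scalemxAr -scalemxAl mxE. Qed.

Lemma qformD (M N : 'M[R]_n) x : qform (M + N) x = qform M x + qform N x.
Proof. by rewrite /qform mulmxDr mulmxDl mxE. Qed.

Lemma qform_rank1 (c d x : 'cV[R]_n) :
  qform (c *m d^T) x = (c^T *m x) 0 0 * (d^T *m x) 0 0.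
Proof.
rewrite /qform !mulmxA -(mulmxA _ _ x) mxE big_ord1.
by rewrite [(x^T *m c) 0 0]tr11 trmx_mul trmxK.
Qed.
End C.
Arguments bvec {R n}.
Arguments bvecP {R n}.
Arguments qformZ {R n}.
Arguments qformD {R n}.
Arguments qform_rank1 {R n}.
Arguments tr11 {R}.
Arguments key {R n E}.

Theorem theorem2 (R : realFieldType) (n : nat) (hn : (1 <= n)%N)
  (E : 'M[R]_n) (alpha : R) (c1 c2 : 'cV[R]_n) :
  E^T = E -> posdef E -> 0 < alpha ->
  c1 != 0 -> c2 != 0 -> row_free (col_mx c1^T c2^T) ->
  let Q : 'M[R]_n := 2^-1 *: (c1 *m c2^T + c2 *m c1^T) in
  exists b : 'cV[R]_(msize n),
    (forall x : 'cV[R]_n, qform Q x = (b^T *m zvec x) 0 0) /\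
    (forall W : 'M[R]_n,
       W = (c2^T *m invmx E *m c2) 0 0 *: (c1 *m c1^T) \/
       W = (c1^T *m invmx E *m c1) 0 0 *: (c2 *m c2^T) ->
       forall x : 'cV[R]_n, qform E x <= alpha ^+ 2 ->
         0 <= qform (block_mx (alpha ^+ 2 *: W) 0 0 (- (b *m b^T)))
                    (col_mx x (zvec x))).
Proof.
move=> ES EP apos _ _ _ Q.
exists (bvec Q); split; first exact: bvecP.
move=> W HW x Ex.
have eQ : qform Q x = (c1^T *m x) 0 0 * (c2^T *m x) 0 0.
  rewrite /Q qformZ qformD !qform_rank1.
  set a1 := (c1^T *m x) 0 0; set a2 := (c2^T *m x) 0 0.
  by field.
have eB : qform (block_mx (alpha ^+ 2 *: W) 0 0 (- (bvec Q *m (bvec Q)^T)))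
                    (col_mx x (zvec x)) = alpha ^+ 2 * qform W x - (qform Q x) ^+ 2.
  rewrite /qform tr_col_mx mul_row_block !mulmx0 addr0 add0r mul_row_col mxE.
  rewrite -scalemxAr -scalemxAl mxE; congr (_ + _).
  rewrite mulmxN mulNmx mxE; congr (- _).
  rewrite -/(qform Q x).   rewrite bvecP mulmxA -(mulmxA _ _ (zvec x)) mxE big_ord1.
  by rewrite [((zvec x)^T *m bvec Q) 0 0]tr11 trmx_mul trmxK expr2.
rewrite eB eQ.
have [k1 k1p] := key ES EP c1 x.
have [k2 k2p] := key ES EP c2 x.
set a1 := (c1^T *m x) 0 0 in k1 k2 *; set a2 := (c2^T *m x) 0 0 in k1 k2 *.
have al : 0 <= alpha ^+ 2 by apply: sqr_ge0.
case: HW => ->; rewrite qformZ qform_rank1 -/a1 -/a2.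
  have h : a2 ^+ 2 <= (c2^T *m invmx E *m c2) 0 0 * alpha ^+ 2.
    apply: le_trans k2 _; exact: ler_wpM2l.
  have h' := h; rewrite -subr_ge0 in h'.
  have := mulr_ge0 (sqr_ge0 a1) h'.
  move=> g; apply: le_trans g _; rewrite le_eqVlt; apply/orP; left; apply/eqP; ring.
have h : a1 ^+ 2 <= (c1^T *m invmx E *m c1) 0 0 * alpha ^+ 2.
  apply: le_trans k1 _; exact: ler_wpM2l.
have h' := h; rewrite -subr_ge0 in h'.
  have := mulr_ge0 (sqr_ge0 a2) h'.
move=> g; apply: le_trans g _; rewrite le_eqVlt; apply/orP; left; apply/eqP; ring.
Qed.
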